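(* Let $(S,\mu)$ be a complete, $\sigma$-finite positive measure space and let $X$ be a Banach space whose norm is Fréchet differentiable. A non-zero $f\in L^1(\mu,X)$ is approximately smooth if and only if $f(s)\neq 0$ for $\mu$-almost every $s\in S$.
   Context: $L^1(\mu,X)$ is the Lebesgue–Bochner space of (classes of a.e. equal) strongly measurable $f:S\to X$ with $\|f\|=\int_S\|f(s)\|\,d\mu(s)<\infty$. For a non-zero $x$ in a normed space $Y$, $J(x)$ denotes the set of support functionals at $x$, i.e. norm-one $F\in Y^*$ with $F(x)=\|x\|$; $x$ is approximately smooth if $\operatorname{diam}J(x)=\sup\{\|F-G\|:F,G\in J(x)\}<2$. The norm of $X$ is Fréchet differentiable if for every non-zero $x\in X$ there is $\varphi\in X^*$ with $\lim_{h\to0}\big|\|x+h\|-\|x\|-\varphi(h)\big|/\|h\|=0$. *)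

(* Defs.v *)
From HB Require Import structures.
From mathcomp Require Import all_boot all_order all_algebra.
From mathcomp Require Import all_classical all_reals all_analysis.
Set Implicit Arguments. Unset Strict Implicit. Unset Printing Implicit Defensive.
Import Order.TTheory GRing.Theory Num.Theory.
Import numFieldNormedType.Exports.
Local Open Scope classical_set_scope.
Local Open Scope ring_scope.

Section BochnerL1.
Context (d : measure_display) (T : measurableType d) (R : realType)
  (X : normedModType R) (mu : {measure set T -> \bar R}).

Definition simple_fun (g : T -> X) : Prop :=
  finite_set (range g) /\ forall y : X, measurable (g @^-1` [set y]).

Definition strongly_measurable (f : T -> X) : Prop :=
  exists g : nat -> T -> X, (forall n, simple_fun (g n)) /\
    {ae mu, forall s, (fun n => g n s) @ \oo --> f s}.

Definition L1norm (f : T -> X) : \bar R := (\int[mu]_s (`|f s|)%:E)%E.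

Definition bochner_L1 (f : T -> X) : Prop :=
  strongly_measurable f /\ (L1norm f < +oo)%E.

Definition L1_linear (F : (T -> X) -> R) : Prop :=
  forall (a : R) (f g : T -> X), bochner_L1 f -> bochner_L1 g ->
    F (fun s => a *: f s + g s) = a * F f + F g.

Definition L1_dual_norm (F : (T -> X) -> R) : \bar R :=
  ereal_sup [set (`|F g|)%:E | g in [set g | bochner_L1 g /\ (L1norm g <= 1)%E]].

Definition L1_dual (F : (T -> X) -> R) : Prop :=
  L1_linear F /\ (L1_dual_norm F < +oo)%E.

Definition support_functionals (f : T -> X) : set ((T -> X) -> R) :=
  [set F | L1_dual F /\ L1_dual_norm F = 1%E /\ (F f)%:E = L1norm f].

Definition diam_support (f : T -> X) : \bar R :=
  ereal_sup [set r | exists F G, support_functionals f F /\ support_functionals f G /\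
                                  r = L1_dual_norm (fun g => F g - G g)].

Definition approximately_smooth (f : T -> X) : Prop :=
  (diam_support f < 2%:E)%E.

End BochnerL1.

Definition frechet_differentiable_norm (R : realType) (X : normedModType R) : Prop :=
  forall x : X, x != 0 -> differentiable (fun y : X => `|y| : R) x.

(* Main.v *)
Require Import Defs.
From HB Require Import structures.
From mathcomp Require Import all_boot all_order all_algebra.
From mathcomp Require Import all_classical all_reals all_analysis.
Import Order.TTheory GRing.Theory Num.Theory.
Import numFieldNormedType.Exports.
Local Open Scope classical_set_scope.
Local Open Scope ring_scope.
From mathcomp Require Import measurable_realfun lra.
Set Warnings "-all".
Set Implicit Arguments. Unset Strict Implicit.
Section Gen.
Context (d : measure_display) (T : measurableType d) (R : realType)
  (X : normedModType R) (mu : {measure set T -> \bar R})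
  (mu_complete : measure_is_complete mu).

Lemma sf_pre (Y : Type) (w : T -> Y) : finite_set (range w) ->
  (forall y, measurable (w @^-1` [set y])) -> forall B, measurable (w @^-1` B).
Proof.
move=> fw mw B.
have -> : w @^-1` B = \bigcup_(y in range w `&` B) w @^-1` [set y].
  apply/seteqP; split => [s Bs|s [y [[s' _ <-] _] /= ->]] //.
  by exists (w s) => //; split => //; exists s.
apply: fin_bigcup_measurable => //.
exact: sub_finite_set fw.
Qed.

Lemma simple_pair (u v : T -> X) : simple_fun u -> simple_fun v ->
  finite_set (range (fun s => (u s, v s))) /\
  forall p, measurable ((fun s => (u s, v s)) @^-1` [set p]).
Proof.
move=> [fu mu'] [fv mv]; split.
  apply: sub_finite_set (finite_setX fu fv).
  by move=> p [s _ <-]; split; exists s.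
move=> [a b].
have -> : (fun s => (u s, v s)) @^-1` [set (a, b)] = u @^-1` [set a] `&` v @^-1` [set b].
  apply/seteqP; split => s /=; first by case=> -> ->.
  by case=> -> ->.
exact: measurableI.
Qed.

Lemma simple_lin (a : R) (u v : T -> X) : simple_fun u -> simple_fun v ->
  simple_fun (fun s => a *: u s + v s).
Proof.
move=> su sv; have [fp mp] := simple_pair su sv; split.
  apply: sub_finite_set (finite_image (fun p : X * X => a *: p.1 + p.2) fp).
  by move=> y [s _ <-]; exists (u s, v s) => //; exists s.
move=> y.
have -> : (fun s => a *: u s + v s) @^-1` [set y] =
  (fun s => (u s, v s)) @^-1` [set p | a *: p.1 + p.2 = y] by [].
exact: sf_pre.
Qed.

Lemma simple_cst (c : X) : simple_fun (fun _ : T => c).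
Proof.
split.
  by apply: sub_finite_set (finite_set1 c) => y [s _ <-].
move=> y; rewrite (_ : (fun _ => c) @^-1` [set y] = cst c @^-1` [set y]) //.
by rewrite preimage_cst; case: ifP.
Qed.

Lemma sm_lin (a : R) (u v : T -> X) : strongly_measurable mu u ->
  strongly_measurable mu v -> strongly_measurable mu (fun s => a *: u s + v s).
Proof.
move=> [gu [sgu aeu]] [gv [sgv aev]].
exists (fun n s => a *: gu n s + gv n s); split.
  by move=> n; apply: simple_lin.
apply: filterS2 aeu aev => s hu hv.
apply: cvgD => //; exact: cvgZr.
Qed.

Lemma sm_cst (c : X) : strongly_measurable mu (fun _ => c).
Proof.
exists (fun _ _ => c); split; first by move=> n; exact: simple_cst.
by apply: aeW => s; exact: cvg_cst.
Qed.

Lemma sm_meas2 (u v : T -> X) (Phi : X -> X -> R) :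
  (forall (a b : nat -> X) x y, a @ \oo --> x -> b @ \oo --> y ->
     (fun n => Phi (a n) (b n)) @ \oo --> Phi x y) ->
  strongly_measurable mu u -> strongly_measurable mu v ->
  measurable_fun setT (fun s => Phi (u s) (v s)).
Proof.
move=> Phic [gu [sgu aeu]] [gv [sgv aev]].
have [N [mN N0 sN]] : {ae mu, forall s,
    (gu^~ s @ \oo --> u s) /\ (gv^~ s @ \oo --> v s)}.
  by apply: filterS2 aeu aev.
rewrite -(setUv N) setUC; apply/measurable_funU => //; first exact: measurableC.
split.
  apply: (@measurable_realfun.measurable_fun_cvg _ _ _ _ (fun n s => Phi (gu n s) (gv n s))).
    move=> n _ B mB.
    have [fp mp] := simple_pair (sgu n) (sgv n).
    apply: measurableI; first exact: measurableC.
    have -> : (fun s => Phi (gu n s) (gv n s)) @^-1` B =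
      (fun s => (gu n s, gv n s)) @^-1` [set p | B (Phi p.1 p.2)] by [].
    exact: sf_pre.
  move=> s /= Ns.
  have [h1 h2] : (gu^~ s @ \oo --> u s) /\ (gv^~ s @ \oo --> v s).
    by apply: contra_notP Ns => /sN.
  exact: Phic.
move=> _ B mB; apply: mu_complete.
apply: (@negligibleS _ _ _ mu N); first by move=> s [].
by exists N; split.
Qed.


Lemma meas_normZD (a : R) (u v : T -> X) : strongly_measurable mu u ->
  strongly_measurable mu v -> measurable_fun setT (fun s => `|a *: u s + v s|).
Proof.
move=> su sv; apply: (@sm_meas2 u v (fun x y => `|a *: x + y|)) => //.
move=> p q x y hp hq; apply: cvg_norm; apply: cvgD => //; exact: cvgZr.
Qed.

Lemma meas_norm (u : T -> X) : strongly_measurable mu u ->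
  measurable_fun setT (fun s => `|u s|).
Proof.
move=> su; apply: (@sm_meas2 u u (fun x y => `|x|)) => //.
by move=> p q x y hp hq; apply: cvg_norm.
Qed.

Lemma int_norm (h : T -> X) : bochner_L1 mu h ->
  mu.-integrable setT (EFin \o (fun s => `|h s|)).
Proof.
move=> [sh hfin]; apply/integrableP; split.
  by apply/measurable_realfun.measurable_EFinP; exact: meas_norm.
rewrite (eq_integral (fun s => (`|h s|)%:E)) //.
by move=> s _; rewrite /= normr_id.
Qed.

Lemma L1norm_ge0 (h : T -> X) : (0 <= L1norm mu h)%E.
Proof. by apply: integral_ge0 => s _; rewrite lee_fin. Qed.

Lemma L1norm_fin (h : T -> X) : bochner_L1 mu h -> L1norm mu h \is a fin_num.
Proof. by move=> [_ hf]; rewrite ge0_fin_numE // L1norm_ge0. Qed.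

Lemma L1_lin (a : R) (u v : T -> X) : bochner_L1 mu u -> bochner_L1 mu v ->
  bochner_L1 mu (fun s => a *: u s + v s).
Proof.
move=> [su uf] [sv vf]; split; first exact: sm_lin.
rewrite /L1norm.
apply: le_lt_trans (@ge0_le_integral _ _ _ mu setT measurableT _
  (fun s => (`|a|%:E * (`|u s|)%:E + (`|v s|)%:E)%E) _ _ _ _) _.
- by move=> s _; rewrite lee_fin.
- by apply/measurable_realfun.measurable_EFinP; exact: meas_normZD.
- apply: emeasurable_funD; last by apply/measurable_realfun.measurable_EFinP; exact: meas_norm.
  apply: emeasurable_funM; first exact: measurable_cst.
  by apply/measurable_realfun.measurable_EFinP; exact: meas_norm.
- move=> s _; rewrite -EFinM -EFinD lee_fin.
  by rewrite (le_trans (ler_normD _ _)) // normrZ.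
have mu' : measurable_fun setT (EFin \o (fun s => `|u s|)).
  by apply/measurable_realfun.measurable_EFinP; exact: meas_norm.
have mv' : measurable_fun setT (EFin \o (fun s => `|v s|)).
  by apply/measurable_realfun.measurable_EFinP; exact: meas_norm.
rewrite ge0_integralD //.
all: try (by move=> s _; rewrite lee_fin).
all: try (by move=> s _; rewrite mule_ge0 // lee_fin).
all: try (by apply: emeasurable_funM => //; exact: measurable_cst).
rewrite ge0_integralZl_EFin //.
all: try (by move=> s _; rewrite lee_fin).
by apply: lte_add_pinfty => //; apply: lte_mul_pinfty.
Qed.

Lemma L1_cst0 : bochner_L1 mu (fun _ => (0 : X)).
Proof.
split; first exact: sm_cst.
rewrite /L1norm (eq_integral (cst 0%E)); first by rewrite integral0.
by move=> s _; rewrite normr0.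
Qed.

Lemma L1norm_scale (c : R) (h : T -> X) : strongly_measurable mu h ->
  L1norm mu (fun s => c *: h s + 0) = (`|c|%:E * L1norm mu h)%E.
Proof.
move=> sh; rewrite /L1norm -ge0_integralZl_EFin //.
- by apply: eq_integral => s _; rewrite addr0 normrZ EFinM.
all: try (by apply/measurable_realfun.measurable_EFinP; exact: meas_norm).
Qed.


Lemma dual_bound (F : (T -> X) -> R) (h : T -> X) : L1_dual mu F ->
  (L1_dual_norm mu F <= 1)%E -> bochner_L1 mu h -> `|F h| <= fine (L1norm mu h).
Proof.
move=> [Flin _] F1 hL.
have F0 : F (fun _ => 0) = 0.
  have := Flin 1 _ _ L1_cst0 L1_cst0.
  rewrite (_ : (fun s => 1 *: (0:X) + 0) = fun _ => 0); last first.
    by apply: funext => s; rewrite scaler0 addr0.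
  by rewrite mul1r => /(congr1 (fun x => x - F (fun _ => 0))); rewrite subrr addrK.
have Fz c : F (fun s => c *: h s + 0) = c * F h.
  by have := Flin c _ _ hL L1_cst0; rewrite F0 addr0.
have r0 : 0 <= fine (L1norm mu h) by rewrite fine_ge0 // L1norm_ge0.
have ub c : 0 <= c -> c * fine (L1norm mu h) <= 1 -> c * `|F h| <= 1.
  move=> c0 cr.
  have gL : bochner_L1 mu (fun s => c *: h s + 0) := L1_lin c hL L1_cst0.
  have : ((`|F (fun s => c *: h s + 0)|)%:E <= 1)%E.
    apply: le_trans F1; apply: le_ereal_sup_tmp.
    exists ((`|F (fun s => c *: h s + 0)|)%:E) => //.
    exists (fun s => c *: h s + 0) => //; split => //.
    rewrite L1norm_scale; last by case: hL.
    by rewrite -(fineK (L1norm_fin hL)) -EFinM lee_fin ger0_norm.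
  by rewrite Fz normrM ger0_norm // lee_fin.
rewrite leNgt; apply/negP => hlt.
set r := fine (L1norm mu h) in r0 hlt ub *.
set a := `|F h| in hlt ub *.
have pos : 0 < r + a by lra.
have c0 : 0 <= 2 / (r + a) by rewrite divr_ge0 //; lra.
have := ub _ c0.
rewrite mulrAC ler_pdivrMr // mul1r mulrAC ler_pdivrMr // mul1r.
move=> /(_ ltac:(lra)); lra.
Qed.

End Gen.

Section Der.
Context (R : realType) (X : normedModType R).

Lemma cvg_dn (u : nat -> R) : u @ \oo --> 0 -> (forall n, u n != 0) -> u @ \oo --> 0^'.
Proof.
move=> u0 un A HA.
have H : \forall n \near \oo, u n != 0 -> A (u n) by exact: (u0 _ HA).
by apply: filterS H => n; apply; exact: un.
Qed.

Lemma der_seq (x v : X) :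
  differentiable (fun y : X => `|y| : R) x ->
  (fun n : nat => (n.+1%:R) * (`|(n.+1%:R)^-1 *: v + x| - `|x|)) @ \oo
   --> 'd (fun y : X => `|y| : R) x v.
Proof.
move=> dx; have dv := @diff_derivable _ _ _ _ _ v dx.
rewrite -deriveE //.
have H := cvg_comp _ _ (@cvg_dn _ (@cvg_harmonic R) (fun n => lt0r_neq0 (harmonic_gt0 n))) dv.
apply: cvg_trans H; apply: near_eq_cvg; near=> n => /=.
by rewrite invrK.
Unshelve. all: by end_near.
Qed.

Lemma term_bound (k : R) (x v : X) : 0 < k ->
  `|k * (`|k^-1 *: v + x| - `|x|)| <= `|v|.
Proof.
move=> k0; rewrite normrM gtr0_norm //.
have := ler_dist_dist (k^-1 *: v + x) x.
rewrite addrK normrZ gtr0_norm ?invr_gt0 // => h.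
by rewrite (le_trans (ler_wpM2l (ltW k0) h)) // mulrA mulfV ?gt_eqF // mul1r.
Qed.

Lemma der_bound (x v : X) : differentiable (fun y : X => `|y| : R) x ->
  `|'d (fun y : X => `|y| : R) x v| <= `|v|.
Proof.
move=> dx; pose proof (cvg_norm (der_seq (v:=v) dx)) as H.
rewrite -(cvg_lim _ H) //; apply: limr_le; first by apply/cvg_ex; eexists; exact: H.
by apply: nearW => n; apply: term_bound.
Qed.

Lemma der_self (x : X) : differentiable (fun y : X => `|y| : R) x ->
  'd (fun y : X => `|y| : R) x x = `|x|.
Proof.
move=> dx; have H := der_seq (v:=x) dx.
have E : (fun n : nat => (n.+1%:R) * (`|(n.+1%:R)^-1 *: x + x| - `|x|)) = cst `|x|.
  apply: funext => n /=.
  rewrite -{2}(scale1r x) -scalerDl normrZ ger0_norm; last by rewrite addr_ge0 // invr_ge0.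
  by rewrite mulrDl mul1r addrK mulrA mulfV // mul1r.
rewrite E in H; exact: (cvg_unique _ H (cvg_cst _)).
Qed.

End Der.

Section IntHelp.
Context (d : measure_display) (T : measurableType d) (R : realType)
  (mu : {measure set T -> \bar R}).

Lemma intB' (u v : T -> R) : mu.-integrable setT (EFin \o u) ->
  mu.-integrable setT (EFin \o v) -> mu.-integrable setT (EFin \o (fun s => u s - v s)).
Proof.
move=> iu iv; apply: eq_integrable (integrableB measurableT iu iv) => //.
all: by move=> s _ /=; rewrite ?EFinB ?EFinD ?EFinM.
Qed.

Lemma intD' (u v : T -> R) : mu.-integrable setT (EFin \o u) ->
  mu.-integrable setT (EFin \o v) -> mu.-integrable setT (EFin \o (fun s => u s + v s)).
Proof.
move=> iu iv; apply: eq_integrable (integrableD measurableT iu iv) => //.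
all: by move=> s _ /=; rewrite ?EFinB ?EFinD ?EFinM.
Qed.

Lemma intZ' (k : R) (u : T -> R) : mu.-integrable setT (EFin \o u) ->
  mu.-integrable setT (EFin \o (fun s => k * u s)).
Proof.
move=> iu; apply: eq_integrable (integrableZl measurableT k iu) => //.
all: by move=> s _ /=; rewrite ?EFinB ?EFinD ?EFinM.
Qed.

End IntHelp.

Section Part1.
Context (d : measure_display) (T : measurableType d) (R : realType)
  (X : normedModType R) (mu : {measure set T -> \bar R})
  (mu_complete : measure_is_complete mu)
  (Xf : frechet_differentiable_norm X)
  (f : T -> X) (fL : bochner_L1 mu f) (fae : {ae mu, forall s, f s != 0}).

Lemma J_le F G g : support_functionals mu f F -> support_functionals mu f G ->
  bochner_L1 mu g -> F g <= G g.
Proof.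
move=> [FD [F1 Ff]] [GD [G1 Gf]] gL.
pose k := fun n : nat => (n.+1%:R : R).
have k0 n : 0 < k n by [].
pose hp := fun n s => (k n)^-1 *: g s + f s.
pose hm := fun n s => (- (k n)^-1) *: g s + f s.
pose rr := fun n s => k n * (`|hp n s| - `|f s|) + k n * (`|hm n s| - `|f s|).
have Ffine : F f = fine (L1norm mu f) by rewrite -Ff.
have Gfine : G f = fine (L1norm mu f) by rewrite -Gf.
have hpL n : bochner_L1 mu (hp n) := L1_lin mu_complete _ gL fL.
have hmL n : bochner_L1 mu (hm n) := L1_lin mu_complete _ gL fL.
have irr n : mu.-integrable setT (EFin \o rr n).
  apply: intD'; apply: intZ'; apply: intB'; exact: (int_norm mu_complete).
have bnd n : F g - G g <= \int[mu]_s rr n s.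
  rewrite /rr RintegralD //; try (apply: intZ'; apply: intB'; exact: (int_norm mu_complete)).
  rewrite !RintegralZl //; try (apply: intB'; exact: (int_norm mu_complete)).
  rewrite !RintegralB //; try exact: (int_norm mu_complete).
  have e1 : F (hp n) = (k n)^-1 * F g + F f := FD.1 ((k n)^-1) _ _ gL fL.
  have e2 : G (hm n) = - (k n)^-1 * G g + G f := GD.1 (- (k n)^-1) _ _ gL fL.
  have b1 : F (hp n) <= fine (L1norm mu (hp n)).
    by apply: le_trans (ler_norm _) (dual_bound mu_complete FD _ (hpL n)); rewrite F1.
  have b2 : G (hm n) <= fine (L1norm mu (hm n)).
    by apply: le_trans (ler_norm _) (dual_bound mu_complete GD _ (hmL n)); rewrite G1.
  rewrite e1 in b1; rewrite e2 in b2.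
  rewrite Ffine in b1; rewrite Gfine in b2.
  change (fine (L1norm mu (hp n))) with (\int[mu]_s `|hp n s|) in b1.
  change (fine (L1norm mu (hm n))) with (\int[mu]_s `|hm n s|) in b2.
  change (fine (L1norm mu f)) with (\int[mu]_s `|f s|) in b1.
  change (fine (L1norm mu f)) with (\int[mu]_s `|f s|) in b2.
  set A := \int[mu]_s `|hp n s| in b1 *.
  set B := \int[mu]_s `|hm n s| in b2 *.
  set C := \int[mu]_s `|f s| in b1 b2 *.
  have h1 : (k n)^-1 * (F g - G g) <= (A - C) + (B - C).
    rewrite mulrBr; rewrite mulNr in b2.
    move: ((k n)^-1 * F g) ((k n)^-1 * G g) b1 b2 => x y; clearbody A B C; lra.
  rewrite -mulrDr.
  have := ler_wpM2l (ltW (k0 n)) h1.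
  by rewrite mulrA mulfV ?gt_eqF // mul1r.
have rrE n s : rr n s = k n * (`|(k n)^-1 *: g s + f s| - `|f s|)
    + k n * (`|(k n)^-1 *: (- g s) + f s| - `|f s|).
  by rewrite /rr /hm /hp scaleNr scalerN.
have mrr n : measurable_fun setT (rr n).
  apply: measurable_funD; apply: measurable_funM; try exact: measurable_cst;
  apply: measurable_funB; try exact: (meas_norm mu_complete fL.1);
  exact: (meas_normZD mu_complete _ gL.1 fL.1).
have ig : mu.-integrable setT (fun s => (2 * `|g s|)%:E).
  apply: eq_integrable (integrableZl measurableT 2 (int_norm mu_complete gL)) => //.
have hff : {ae mu, forall s, setT s -> (fun n => (rr n s)%:E) @ \oo --> (cst 0%E s : \bar R)}.
  apply: filterS fae => s fs0 _ /=.
  apply: cvg_EFin; first exact: nearW.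
  have dx := Xf fs0.
  have -> : fine \o (fun n => (rr n s)%:E) = (fun n : nat => (n.+1%:R) * (`|(n.+1%:R)^-1 *: g s + f s| - `|f s|)
     + (n.+1%:R) * (`|(n.+1%:R)^-1 *: (- g s) + f s| - `|f s|)).
    by apply: funext => n /=; rewrite rrE.
  have -> : (0 : R) = 'd (fun y : X => `|y| : R) (f s) (g s) + 'd (fun y : X => `|y| : R) (f s) (- g s).
    by rewrite linearN subrr.
  by apply: cvgD; exact: der_seq.
have hfg : {ae mu, forall s n, setT s -> (`|(rr n s)%:E| <= (2 * `|g s|)%:E)%E}.
  apply: aeW => s n _ /=; rewrite lee_fin rrE.
  apply: le_trans (ler_normD _ _) _.
  rewrite mulr2n mulrDl mul1r; apply: lerD.
    exact: term_bound.
  by rewrite -(normrN (g s)); exact: term_bound.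
have [_ _ H3] := @dominated_convergence _ _ _ mu setT measurableT
  (fun n s => (rr n s)%:E) (cst 0%E) (fun s => (2 * `|g s|)%:E)
  (fun n => (measurable_EFinP _ _).2 (mrr n)) (measurable_cst _) hff ig hfg.
rewrite integral0 in H3.
have : ((F g - G g)%:E <= 0)%E.
  rewrite -(cvg_lim _ H3) //; apply: lime_ge; first exact: cvgP H3.
  apply: nearW => n /=.
  have -> : (\int[mu]_(x in [set: T]) (rr n x)%:E)%E = (\int[mu]_s rr n s)%:E.
    by rewrite /Rintegral fineK // (integrable_fin_num measurableT (irr n)).
  by rewrite lee_fin bnd.
by move=> h; rewrite -subr_le0 -lee_fin; exact: h.
Qed.



Lemma part1 : approximately_smooth mu f.
Proof.
rewrite /approximately_smooth /diam_support.
apply: (@le_lt_trans _ _ 0%E); last by rewrite lte_fin.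
apply: ub_ereal_sup => r [F [G [JF [JG ->]]]].
rewrite /L1_dual_norm; apply: ub_ereal_sup => _ [g [gL _] <-].
rewrite (_ : F g - G g = 0) ?normr0 //.
by apply/eqP; rewrite subr_eq0 eq_le !J_le.
Qed.

End Part1.

Section Part2.
Context (d : measure_display) (T : measurableType d) (R : realType)
  (X : normedModType R) (mu : {measure set T -> \bar R})
  (mu_complete : measure_is_complete mu)
  (Xf : frechet_differentiable_norm X)
  (f : T -> X) (fL : bochner_L1 mu f) (s0 : T) (fs0 : f s0 != 0).

Local Notation nrm := (fun y : X => `|y| : R).

Definition psi (sg : R) (s : T) (v : X) : R :=
  if f s == 0 then sg * 'd nrm (f s0) v else 'd nrm (f s) v.

Lemma psi_lin sg s a v w : psi sg s (a *: v + w) = a * psi sg s v + psi sg s w.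
Proof.
rewrite /psi; case: ifP => _; rewrite linearD linearZ /=.
  by rewrite mulrDr mulrCA.
by [].
Qed.

Lemma psi_bound sg s v : `|sg| <= 1 -> `|psi sg s v| <= `|v|.
Proof.
move=> hs; rewrite /psi; case: ifPn => h.
  rewrite normrM; apply: (le_trans (ler_wpM2r (normr_ge0 _) hs)).
  by rewrite mul1r; exact: der_bound (Xf fs0).
exact: der_bound (Xf h).
Qed.

Lemma psi_self sg s : psi sg s (f s) = `|f s|.
Proof.
rewrite /psi; case: eqP => [->|/eqP h]; first by rewrite linear0 mulr0 normr0.
exact: der_self (Xf h).
Qed.

Lemma psi0 sg s : psi sg s 0 = 0.
Proof. by rewrite /psi; case: ifP => _; rewrite linear0 ?mulr0. Qed.

Lemma mA : measurable [set s | f s = 0].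
Proof.
have := meas_norm mu_complete fL.1 measurableT (measurable_set1 (0:R)).
rewrite setTI; congr measurable; apply/seteqP; split => s /=.
  by move/eqP; rewrite normr_eq0 => /eqP.
by move=> ->; rewrite normr0.
Qed.

Lemma mpsi sg g : strongly_measurable mu g ->
  measurable_fun setT (fun s => psi sg s (g s)).
Proof.
move=> sgm.
rewrite -(setUv [set s | f s = 0]); apply/measurable_funU => //.
  exact: mA.
  exact/measurableC/mA.
split.
- apply: (@eq_measurable_fun _ _ _ _ _ (fun s => sg * 'd nrm (f s0) (g s))).
    by move=> s; rewrite inE /= => fs; rewrite /psi fs eqxx.
  apply: measurable_funM; first exact: measurable_cst.
  apply: (measurable_funS measurableT (@subsetT _ _)).
  apply: (@sm_meas2 _ _ _ _ _ mu_complete g g (fun _ y => 'd nrm (f s0) y)) => //.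
  move=> a b x y _ hb; apply: cvg_comp hb _.
  exact: (diff_continuous (Xf fs0)).
- apply: (@measurable_realfun.measurable_fun_cvg _ _ _ _
    (fun n s => n.+1%:R * (`|(n.+1%:R)^-1 *: g s + f s| - `|f s|))).
    move=> n; apply: (measurable_funS measurableT (@subsetT _ _)).
    apply: measurable_funM; first exact: measurable_cst.
    apply: measurable_funB; first exact: (meas_normZD mu_complete _ sgm fL.1).
    exact: (meas_norm mu_complete fL.1).
  move=> s /= /eqP fs; rewrite /psi (negbTE fs).
  exact: der_seq (Xf fs).
Qed.


Lemma ipsi sg g : `|sg| <= 1 -> bochner_L1 mu g ->
  mu.-integrable setT (EFin \o (fun s => psi sg s (g s))).
Proof.
move=> hs gL; apply: (le_integrable measurableT _ _ (int_norm mu_complete gL)).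
  by apply/measurable_EFinP; exact: mpsi gL.1.
by move=> s _ /=; rewrite lee_fin normr_id; exact: psi_bound.
Qed.

Definition Fs (sg : R) (g : T -> X) : R := \int[mu]_s psi sg s (g s).

Lemma Fs_lin sg : `|sg| <= 1 -> L1_linear mu (Fs sg).
Proof.
move=> hs a g h gL hL; rewrite /Fs.
transitivity (\int[mu]_s (a * psi sg s (g s) + psi sg s (h s))).
  by congr (Rintegral _ _ _); apply: funext => s; rewrite psi_lin.
rewrite RintegralD //; first by rewrite RintegralZl //; exact: ipsi.
  by apply: intZ'; exact: ipsi.
exact: ipsi.
Qed.

Lemma Fs_bound sg g : `|sg| <= 1 -> bochner_L1 mu g ->
  ((`|Fs sg g|)%:E <= L1norm mu g)%E.
Proof.
move=> hs gL; rewrite /Fs EFin_normr_Rintegral //; last exact: ipsi.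
have mp : measurable_fun setT (fun s => (psi sg s (g s))%:E).
  by apply/measurable_EFinP; exact: mpsi gL.1.
apply: le_trans (le_abse_integral mu measurableT mp) _.
apply: ge0_le_integral => //.
- apply/measurable_EFinP => /=.
  apply: (measurableT_comp (@normr_measurable _ _)).
  exact: mpsi gL.1.
- by apply/measurable_EFinP; exact: (meas_norm mu_complete gL.1).
- by move=> s _ /=; rewrite lee_fin psi_bound.
Qed.

Lemma Fs_norm_le sg : `|sg| <= 1 -> (L1_dual_norm mu (Fs sg) <= 1)%E.
Proof.
move=> hs; apply: ub_ereal_sup => _ [g [gL g1] <-].
exact: le_trans (Fs_bound hs gL) g1.
Qed.

Lemma Fs_f sg : (Fs sg f)%:E = L1norm mu f.
Proof.
rewrite /Fs; transitivity ((\int[mu]_s `|f s|)%:E).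
  by congr EFin; congr (Rintegral _ _ _); apply: funext => s; rewrite psi_self.
by rewrite /Rintegral fineK //; exact: L1norm_fin fL.
Qed.


Lemma meas_const (P : Prop) : measurable [set _ : T | P].
Proof.
case: (pselect P) => p.
  by rewrite (_ : [set _ | P] = setT) //; apply/seteqP; split.
by rewrite (_ : [set _ | P] = set0) //; apply/seteqP; split.
Qed.

Section GB.
Variables (B : set T) (mB : measurable B) (BA : B `<=` [set s | f s = 0])
  (B0 : (0 < mu B)%E) (Boo : (mu B < +oo)%E).

Let m := fine (mu B).
Let m0 : 0 < m. Proof. by apply: fine_gt0; rewrite B0 Boo. Qed.
Let c := m^-1.
Let u := `|f s0|^-1 *: f s0.
Let nx0 : 0 < `|f s0|. Proof. by rewrite normr_gt0. Qed.
Let nu : `|u| = 1.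
Proof. by rewrite normrZ ger0_norm ?invr_ge0 // mulVf // gt_eqF. Qed.
Let lu : 'd nrm (f s0) u = 1.
Proof.
by rewrite /u linearZ /= (der_self (Xf fs0)) [_ *: _]mulVf // gt_eqF.
Qed.

Definition gB (s : T) : X := if s \in B then c *: u else 0.

Lemma gB_simple : simple_fun gB.
Proof.
split.
  apply: (@sub_finite_set _ _ ([set c *: u] `|` [set 0])).
    by move=> y [s _ <-]; rewrite /gB; case: ifP => _; [left|right].
  by rewrite finite_setU; split; exact: finite_set1.
move=> y.
have -> : gB @^-1` [set y] = (B `&` [set _ | c *: u = y]) `|` (~` B `&` [set _ | (0:X) = y]).
  apply/seteqP; split => s /=; rewrite /gB.
    case: ifPn => [/set_mem Bs <-|nBs <-]; [by left|right; split => //].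
    by move=> Bs; move: nBs; rewrite (mem_set Bs).
  case=> [[Bs <-]|[nBs <-]]; case: ifPn => // h.
    by move: h; rewrite mem_set.
  by move/set_mem: h.
apply: measurableU; apply: measurableI => //; try exact: meas_const.
exact: measurableC.
Qed.

Lemma gB_normE s : `|gB s| = c * \1_B s.
Proof.
rewrite /gB indicE; case: ifP => _.
  by rewrite normrZ nu mulr1 ger0_norm ?invr_ge0 ?ltW // mulr1.
by rewrite normr0 mulr0.
Qed.

Lemma int_indic : mu.-integrable setT (EFin \o \1_B).
Proof.
apply/integrableP; split.
  by apply/measurable_EFinP; exact: measurable_indic.
rewrite (eq_integral (fun s => (\1_B s)%:E)).
  by rewrite integral_indic // setIT.
by move=> s _ /=; rewrite ger0_norm.
Qed.

Lemma gB_norm : L1norm mu gB = 1%E.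
Proof.
rewrite /L1norm (eq_integral (fun s => (c%:E * (\1_B s)%:E)%E)); last first.
  by move=> s _; rewrite gB_normE EFinM.
have Bfin : mu B \is a fin_num by rewrite ge0_fin_numE.
rewrite ge0_integralZl_EFin //.
all: try (by move=> s _; rewrite lee_fin).
all: try (by apply/measurable_EFinP; exact: measurable_indic).
all: try (by rewrite invr_ge0 ltW).
by rewrite integral_indic // setIT -(fineK Bfin) -EFinM mulVf // gt_eqF.
Qed.

Lemma gB_L1 : bochner_L1 mu gB.
Proof.
split; last by rewrite gB_norm ltry.
exists (fun _ => gB); split => [_|]; first exact: gB_simple.
by apply: aeW => s; exact: cvg_cst.
Qed.

Lemma Fs_gB sg : Fs sg gB = sg.
Proof.
rewrite /Fs; transitivity (\int[mu]_s ((sg * c) * \1_B s)).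
  congr (Rintegral _ _ _); apply: funext => s; rewrite /gB indicE.
  case: ifPn => h.
    have fs : f s = 0 := BA (set_mem h).
    by rewrite /psi fs eqxx linearZ /= lu mulr1; congr (_ * _); exact: mulr1.
  by rewrite psi0 /= mulr0.
rewrite RintegralZl //; last exact: int_indic.
rewrite /Rintegral integral_indic // setIT -/m -mulrA mulVf ?mulr1 //.
exact: lt0r_neq0.
Qed.

Lemma Fs_J sg : `|sg| = 1 -> support_functionals mu f (Fs sg).
Proof.
move=> hs; have hs' : `|sg| <= 1 by rewrite hs.
split; first split; first exact: Fs_lin.
  exact: le_lt_trans (Fs_norm_le hs') (ltry _).
split; last exact: Fs_f.
apply/le_anti/andP; split; first exact: Fs_norm_le.
apply: le_ereal_sup_tmp; exists ((`|Fs sg gB|)%:E); last by rewrite Fs_gB hs.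
exists gB => //; split; [exact: gB_L1 | by rewrite gB_norm].
Qed.

Lemma not_smooth : ~ approximately_smooth mu f.
Proof.
rewrite /approximately_smooth /diam_support; apply/negP; rewrite -leNgt.
apply: le_ereal_sup_tmp; exists (L1_dual_norm mu (fun g => Fs 1 g - Fs (-1) g)).
  exists (Fs 1), (Fs (-1)); split; first by apply: Fs_J; rewrite normr1.
  by split => //; apply: Fs_J; rewrite normrN normr1.
apply: le_ereal_sup_tmp; exists ((`|Fs 1 gB - Fs (-1) gB|)%:E).
  exists gB => //; split; [exact: gB_L1 | by rewrite gB_norm].
by rewrite !Fs_gB opprK lee_fin ger0_norm.
Qed.

End GB.

End Part2.

Unset Implicit Arguments. Set Strict Implicit.

Theorem corollary3p3 (d : measure_display) (T : measurableType d) (R : realType)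
  (X : completeNormedModType R) (mu : {measure set T -> \bar R})
  (mu_complete : measure_is_complete mu)
  (mu_sigma_finite : sigma_finite setT mu)
  (X_frechet : frechet_differentiable_norm X)
  (f : T -> X) (f_L1 : bochner_L1 mu f) (f_nonzero : L1norm mu f <> 0%E) :
  approximately_smooth mu f <-> {ae mu, forall s, f s != 0}.
Proof.
split; last by move=> fae; exact: (part1 mu_complete X_frechet f_L1 fae).
move=> As; apply: contrapT => nae.
have [s0 fs0] : exists s0, f s0 != 0.
  case: (pselect (exists s0, f s0 != 0)) => // h; exfalso; apply: f_nonzero.
  rewrite /L1norm (eq_integral (cst 0%E)) ?integral0 // => s _.
  case: (eqVneq (f s) 0) => [->|fs]; first by rewrite normr0.
  by exfalso; apply: h; exists s.
have [F Fcov Fm] := mu_sigma_finite.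
have mA' := mA mu_complete f_L1.
have [i Hi] : exists i, mu ([set s | f s = 0] `&` F i) != 0%E.
  case: (pselect (exists i, mu ([set s | f s = 0] `&` F i) != 0%E)) => // h.
  exfalso; apply: nae.
  apply: (@negligibleS _ _ _ mu (\bigcup_i ([set s | f s = 0] `&` F i))).
    move=> s /= hs.
    have : [set: T] s by [].
    rewrite Fcov => -[j _ Fj]; exists j => //; split => //.
    by move/negP: hs; rewrite negbK => /eqP.
  apply: negligible_bigcup => j; exists ([set s | f s = 0] `&` F j); split => //.
    exact: measurableI mA' (Fm j).1.
  case: (eqVneq (mu ([set s | f s = 0] `&` F j)) 0%E) => // ne.
  by exfalso; apply: h; exists j.
have mB : measurable ([set s | f s = 0] `&` F i) by exact: measurableI mA' (Fm i).1.
have B0 : (0 < mu ([set s | f s = 0%R] `&` F i))%E by rewrite lt0e Hi measure_ge0.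
have Boo : (mu ([set s | f s = 0%R] `&` F i) < +oo)%E.
  apply: le_lt_trans (Fm i).2.
  apply: le_measure; [rewrite inE; exact: mB | rewrite inE; exact: (Fm i).1 | exact: subIsetr].
exact: (not_smooth mu_complete X_frechet f_L1 fs0 mB (@subIsetl _ _ _) B0 Boo As).
Qed.
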